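(* Let $d\ge1$ and let $X_1,\dots,X_d$ be random variables with $X_i\sim\mathrm{Bernoulli}(p_i)$ satisfying $\mathbb{E}[X_iX_j]\le p_ip_j$ for all $i\neq j$. Let $\tilde X_1,\dots,\tilde X_d$ be mutually independent with $\tilde X_i$ equal in distribution to $X_i$, and set $Z=\sum_{i=1}^dX_i$, $\tilde Z=\sum_{i=1}^d\tilde X_i$. Then $\mathbb{P}(Z>0)\ge\frac12\mathbb{P}(\tilde Z>0)$. *)

(* Defs.v *)
From HB Require Import structures.
From mathcomp Require Import all_boot all_order all_algebra.
From mathcomp Require Import all_classical all_reals all_analysis.
Set Implicit Arguments. Unset Strict Implicit. Unset Printing Implicit Defensive.
Import Order.TTheory GRing.Theory Num.Theory.
Local Open Scope classical_set_scope.
Local Open Scope ring_scope.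

Definition mutually_independent (dT : measure_display) (T : measurableType dT)
    (R : realType) (P : probability T R) (n : nat) (X : 'I_n -> {RV P >-> R}) :=
  forall (J : {set 'I_n}) (B : 'I_n -> set R),
    (forall i, measurable (B i)) ->
    P (\bigcap_(i in [set i | i \in J]) (X i @^-1` B i)) =
    (\prod_(i in J) P (X i @^-1` B i))%E.

(* Main.v *)
Require Import Defs.
From HB Require Import structures.
From mathcomp Require Import all_boot all_order all_algebra.
From mathcomp Require Import all_classical all_reals all_analysis.
From mathcomp Require Import ring lra.
From mathcomp Require Import measurable_realfun.
Import Order.TTheory GRing.Theory Num.Theory.
Local Open Scope classical_set_scope.
Local Open Scope ring_scope.
Section helpers.
Context dd (TT : measurableType dd) (RR : realType).

Lemma bigU_mem (I : eqType) (r : seq I) (F : I -> set TT) w :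
  (\big[setU/set0]_(i <- r) F i) w <-> exists2 i, i \in r & F i w.
Proof.
elim: r => [|a r IH]; first by rewrite big_nil; split => // -[].
rewrite big_cons; split.
  case=> [Fa|/IH [i ir Fi]]; first by exists a; rewrite ?mem_head.
  by exists i; rewrite // inE ir orbT.
case=> i; rewrite inE => /orP[/eqP->|ir] Fi; [by left|right; apply/IH; by exists i].
Qed.

Lemma union_bound (mu : {measure set TT -> \bar RR}) (I : eqType) (r : seq I)
  (F : I -> set TT) : (forall i, measurable (F i)) ->
  (mu (\big[setU/set0]_(i <- r) F i) <= \sum_(i <- r) mu (F i))%E.
Proof.
move=> mF; elim: r => [|a r IH]; first by rewrite !big_nil measure0.
rewrite !big_cons; apply: le_trans (measureU2 mu (mF a) (bigsetU_measurable _ _)) _.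
  by move=> i _; exact: mF.
exact: leeD2l.
Qed.

Lemma meas_pos_sum (I : finType) (f : I -> {mfun TT >-> RR}) :
  measurable [set w | 0 < \sum_(i : I) f i w].
Proof.
have mf : measurable_fun setT (fun w => \sum_(i : I) f i w).
  by apply: measurable_sum => i; exact: measurable_funPT.
have -> : [set w | 0 < \sum_(i : I) f i w] =
    (fun w => \sum_(i : I) f i w) @^-1` `]0, +oo[.
  by apply/seteqP; split => w /=; rewrite in_itv /= andbT.
by rewrite -[X in measurable X]setTI; apply: mf => //; exact: measurable_itv.
Qed.
End helpers.

Theorem corollary11 (R : realType) (d : nat) (hd : (0 < d)%N)
  (dT : measure_display) (T : measurableType dT) (P : probability T R)
  (dT' : measure_display) (T' : measurableType dT') (Q : probability T' R)
  (p : 'I_d -> R) (X : 'I_d -> {RV P >-> R}) (Xt : 'I_d -> {RV Q >-> R}) :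
  (* X i ~ Bernoulli (p i) *)
  (forall i, P (X i @^-1` [set 1]) = (p i)%:E /\
             P (X i @^-1` [set 0]) = (1 - p i)%:E) ->
  (* E[X_i X_j] <= p_i p_j for i <> j *)
  (forall i j, i != j -> ('E_P[X i \* X j] <= (p i * p j)%:E)%E) ->
  (* Xt i has the same distribution as X i *)
  (forall i (A : set R), measurable A ->
     distribution Q (Xt i) A = distribution P (X i) A) ->
  (* the Xt i are mutually independent *)
  mutually_independent Xt ->
  ((2^-1)%:E * Q [set w | (0 < \sum_(i < d) Xt i w)%R] <=
     P [set w | (0 < \sum_(i < d) X i w)%R])%E.
Proof.
move=> hB hE hD _.
pose A i := X i @^-1` [set 1].
pose B0 i := X i @^-1` [set 0].
have mA i : measurable (A i) by exact: measurable_funPTI.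
have mB0 i : measurable (B0 i) by exact: measurable_funPTI.
have PA i : P (A i) = (p i)%:E by case: (hB i).
have PB0 i : P (B0 i) = (1 - p i)%:E by case: (hB i).
have p0 i : 0 <= p i by rewrite -lee_fin -PA measure_ge0.
have p1 i : p i <= 1 by rewrite -lee_fin -PA probability_le1.
pose N i := ~` (A i `|` B0 i).
have mN i : measurable (N i) by apply: measurableC; exact: measurableU.
have PN i : P (N i) = 0%E.
  rewrite probability_setC; last exact: measurableU.
  rewrite measureU //.
    transitivity (1 - ((p i)%:E + (1 - p i)%:E))%E; first by rewrite -PA -PB0.
    by rewrite -EFinD addrC subrK subrr.
  apply/seteqP; split => w //= [h1 h2].
  have e1 : X i w = 1 := h1; have e2 : X i w = 0 := h2.
  by move: e1; rewrite e2 => /eqP; rewrite eq_sym oner_eq0.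
pose mu := \sum_(i < d) p i.
have mu0 : 0 <= mu by apply: sumr_ge0 => i _.
pose SQ := [set w | (0 < \sum_(i < d) Xt i w)%R].
have mSQ : measurable SQ by exact: meas_pos_sum.
have hQ : (Q SQ <= mu%:E)%E.
  pose G i := Xt i @^-1` ~` [set 0].
  have mG i : measurable (G i) by apply: measurable_funPTI; exact: measurableC.
  have QG i : Q (G i) = (p i)%:E.
    have := hD i (~` [set 0]) (measurableC (measurable_set1 0)).
    rewrite /distribution /pushforward /= => ->.
    rewrite -preimage_setC probability_setC //.
    transitivity (1 - (1 - p i)%:E)%E; first by rewrite -PB0.
    by rewrite -EFinB opprB addrC subrK.
  apply: (@le_trans _ _ (Q (\big[setU/set0]_(i < d) G i))).
    apply: le_measure; rewrite ?inE; [exact: mSQ | exact: bigsetU_measurable | ].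
    move=> w /= Sw; apply/bigU_mem; apply: contrapT => H.
    move: Sw; rewrite /SQ /= big1 ?ltxx // => i _; apply: contrapT => Hi; apply: H.
    by exists i; [exact: mem_index_enum | exact: Hi].
  apply: le_trans (@union_bound _ _ _ Q _ _ G mG) _.
  rewrite /mu -sumEFin; apply: lee_sum => i _.
  rewrite -QG; exact: le_refl.
have hQ1 : (Q SQ <= 1)%E by exact: probability_le1.
pose U := \big[setU/set0]_(i < d) A i.
have mU : measurable U by exact: bigsetU_measurable.
pose SP := [set w | (0 < \sum_(i < d) X i w)%R].
have mSP : measurable SP by exact: meas_pos_sum.
pose Nall := \big[setU/set0]_(i < d) N i.
have mNall : measurable Nall by exact: bigsetU_measurable.
have PNall : P Nall = 0%E.
  apply/eqP; rewrite -measure_le0.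
  apply: le_trans (@union_bound _ _ _ P _ _ N mN) _.
  rewrite big1 // => i _; exact: PN.
have hPU : (P U <= P SP)%E.
  apply: (@le_trans _ _ (P (SP `|` Nall))).
    apply: le_measure; rewrite ?inE; [exact: mU | exact: measurableU | ].
    move=> w /bigU_mem [i _ Aiw].
    have [Nw|nNw] := pselect (Nall w); first by right.
    left; rewrite /SP /=.
    have h01 j : X j w = 1 \/ X j w = 0.
      apply: contrapT => H; apply: nNw; apply/bigU_mem.
      by exists j; [exact: mem_index_enum | exact: H].
    have e1 : X i w = 1 := Aiw.
    rewrite (bigD1 i) //= e1; apply: (@lt_le_trans _ _ 1); first exact: ltr01.
    rewrite lerDl; apply: sumr_ge0 => j _; by case: (h01 j) => ->.
  apply: le_trans (measureU2 P mSP mNall) _.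
  rewrite [X in (_ + X <= _)%E](_ : _ = 0%E); last exact: PNall.
  rewrite adde0; exact: le_refl.
have hXind k w : ~ N k w -> X k w = \1_(A k) w.
  move=> /contrapT [h|h]; rewrite indicE.
    by rewrite (mem_set h); exact: h.
  rewrite memNset; first exact: h.
  move=> h1; have e1 : X k w = 1 := h1; have e2 : X k w = 0 := h.
  by move: e1; rewrite e2 => /eqP; rewrite eq_sym oner_eq0.
pose c i j := fine (P (A i `&` A j)).
have Pc i j : P (A i `&` A j) = (c i j)%:E.
  by rewrite fineK // fin_num_measure //; exact: measurableI.
have hc i j : i != j -> c i j <= p i * p j.
  move=> ij; rewrite -lee_fin -Pc.
  have EE : ('E_P[X i \* X j] = P (A i `&` A j))%E.
    rewrite unlock.
    transitivity (\int[P]_w (\1_(A i `&` A j) w)%:E)%E; last first.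
      by rewrite integral_indic ?setIT //; exact: measurableI.
    apply: ae_eq_integral => //.
    - apply/measurable_EFinP; apply: measurable_funM; exact: measurable_funPT.
    - apply/measurable_EFinP; apply: measurable_indic; exact: measurableI.
    - exists (N i `|` N j); split; first exact: measurableU.
        apply/eqP; rewrite -measure_le0; apply: le_trans (measureU2 P (mN i) (mN j)) _.
        rewrite [X in (X + _ <= _)%E](_ : _ = 0%E); last exact: PN.
        rewrite [X in (_ + X <= _)%E](_ : _ = 0%E); last exact: PN.
        by rewrite adde0.
      move=> w /= H; apply: contrapT => /not_orP [ni nj]; apply: H => _.
      by rewrite indicI /= (hXind i w ni) (hXind j w nj).
  rewrite -EE; exact: hE.
pose a := 1 + mu.
have a0 : 0 < a by rewrite /a; lra.
pose f2 := fun w => \sum_(i < d) ((2 * a) * \1_(A i) w)%:E.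
pose f1 := fun w => ((a ^+ 2) * \1_U w)%:E +
  \sum_(i < d) \sum_(j < d) (\1_(A i `&` A j) w)%:E.
have le12 : (\int[P]_w f2 w <= \int[P]_w f1 w)%E.
  apply: ge0_le_integral => //.
  - move=> w _; apply: sume_ge0 => i _; rewrite lee_fin; apply: mulr_ge0.
      by rewrite /a; lra.
    by rewrite indicE; exact: ler0n.
  - rewrite /f2; apply: emeasurable_sum => i; apply/measurable_EFinP.
    apply: measurable_funM; [exact: measurable_cst | exact: measurable_indic].
  - rewrite /f1; apply: emeasurable_funD.
      apply/measurable_EFinP.
      apply: measurable_funM; [exact: measurable_cst | exact: measurable_indic].
    apply: emeasurable_sum => i; apply: emeasurable_sum => j.
    apply/measurable_EFinP; apply: measurable_indic; exact: measurableI.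
  move=> w _; rewrite /f1 /f2.
  have sq : \sum_(i < d) \sum_(j < d) \1_(A i `&` A j) w =
      (\sum_(i < d) \1_(A i) w) ^+ 2 :> R.
    rewrite expr2 mulr_suml; apply: eq_bigr => i _.
    rewrite mulr_sumr; apply: eq_bigr => j _.
    by rewrite indicI.
  under [X in (_ <= _ + X)%E]eq_bigr do rewrite sumEFin.
  rewrite !sumEFin -EFinD lee_fin sq -mulr_sumr.
  set s := \sum_(i < d) \1_(A i) w.
  have Ige0 : 0 <= \1_U w :> R by rewrite indicE; exact: ler0n.
  have [s0|s0] := eqVneq s 0.
    rewrite s0 mulr0 expr0n /= addr0; apply: mulr_ge0 => //; exact: sqr_ge0.
  have Uw : w \in U.
    apply/mem_set/bigU_mem; apply: contrapT => H.
    move/eqP: s0; apply; rewrite /s big1 // => i _.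
    rewrite indicE memNset // => Ai; apply: H.
    by exists i; [exact: mem_index_enum | exact: Ai].
  rewrite indicE Uw mulr1 -subr_ge0.
  have -> : a ^+ 2 + s ^+ 2 - 2 * a * s = (a - s) ^+ 2 by ring.
  exact: sqr_ge0.
pose u := fine (P U).
have PU : P U = u%:E by rewrite fineK // fin_num_measure.
have If2 : (\int[P]_w f2 w = (2 * a * mu)%:E)%E.
  rewrite /f2 ge0_integral_sum //.
  - rewrite /mu mulr_sumr -sumEFin; apply: eq_bigr => i _.
    under eq_integral do rewrite EFinM.
    rewrite ge0_integralZl_EFin //.
    + rewrite integral_indic // setIT.
      transitivity ((2 * a)%:E * (p i)%:E)%E; first by rewrite -(PA i).
      by rewrite -EFinM.
    + apply/measurable_EFinP; exact: measurable_indic.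
    + by rewrite /a; lra.
  - move=> i; apply/measurable_EFinP.
    apply: measurable_funM; [exact: measurable_cst | exact: measurable_indic].
  - move=> i w _; rewrite lee_fin; apply: mulr_ge0.
      by rewrite /a; lra.
    by rewrite indicE; exact: ler0n.
have If1 : (\int[P]_w f1 w =
    (a ^+ 2 * u + \sum_(i < d) \sum_(j < d) c i j)%:E)%E.
  rewrite /f1 ge0_integralD //.
  - rewrite EFinD; congr (_ + _)%E.
    + under eq_integral do rewrite EFinM.
      rewrite ge0_integralZl_EFin //.
      * rewrite integral_indic // setIT.
        transitivity ((a ^+ 2)%:E * u%:E)%E; first by rewrite -PU.
        by rewrite -EFinM.
      * apply/measurable_EFinP; exact: measurable_indic.
      * exact: sqr_ge0.
    + rewrite ge0_integral_sum //.
      * rewrite -sumEFin; apply: eq_bigr => i _.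
        rewrite ge0_integral_sum //.
        -- rewrite -sumEFin; apply: eq_bigr => j _.
           rewrite integral_indic //; [rewrite setIT; exact: Pc | exact: measurableI].
        -- move=> j; apply/measurable_EFinP; apply: measurable_indic.
           exact: measurableI.
      * move=> i; apply: emeasurable_sum => j; apply/measurable_EFinP.
        apply: measurable_indic; exact: measurableI.
      * move=> i w _; apply: sume_ge0 => j _; rewrite lee_fin indicE.
        exact: ler0n.
  - move=> w _; rewrite lee_fin; apply: mulr_ge0; first exact: sqr_ge0.
    by rewrite indicE; exact: ler0n.
  - apply/measurable_EFinP.
    apply: measurable_funM; [exact: measurable_cst | exact: measurable_indic].
  - move=> w _; apply: sume_ge0 => i _; apply: sume_ge0 => j _.
    by rewrite lee_fin indicE; exact: ler0n.
  - apply: emeasurable_sum => i; apply: emeasurable_sum => j.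
    apply/measurable_EFinP; apply: measurable_indic; exact: measurableI.
move: le12; rewrite If1 If2 lee_fin => le12.
have hC : \sum_(i < d) \sum_(j < d) c i j <= mu * mu + mu.
  have -> : mu * mu + mu = \sum_(i < d) (\sum_(j < d) p i * p j + p i).
    rewrite big_split /= /mu mulr_suml; congr (_ + _).
    by apply: eq_bigr => i _; rewrite mulr_sumr.
  apply: ler_sum => i _.
  rewrite (bigD1 i) //= [X in _ <= X + _](bigD1 i) //=.
  have cii : c i i = p i by rewrite /c setIid PA.
  have : \sum_(j < d | j != i) c i j <= \sum_(j < d | j != i) p i * p j.
    by apply: ler_sum => j ji; apply: hc; rewrite eq_sym.
  have := mulr_ge0 (p0 i) (p0 i).
  rewrite cii; lra.
have h1 : a * mu <= a * (a * u) by rewrite /a in le12 *; lra.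
have h2 : mu <= a * u by rewrite -(ler_pM2l a0).
pose q := fine (Q SQ).
have QSQ : Q SQ = q%:E by rewrite fineK // fin_num_measure.
have q0 : 0 <= q by rewrite -lee_fin -QSQ measure_ge0.
have qmu : q <= mu by rewrite -lee_fin -QSQ.
have q1 : q <= 1 by rewrite -lee_fin -QSQ.
have hq : 0 <= 1 - q by rewrite subr_ge0.
have h3 : q * mu <= mu by have := mulr_ge0 hq mu0; lra.
have h4 : a * q <= a * (2 * u) by rewrite /a in h2 *; lra.
have h5 : q <= 2 * u by rewrite -(ler_pM2l a0).
apply: le_trans _ hPU.
rewrite -/SQ QSQ PU -EFinM lee_fin; lra.
Qed.
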